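(* Let $S\subset\mathbb{R}^n$ be a polyhedron and $U_0=\{A\in\mathbb{R}^{n\times n}\mid \mathrm{Tr}(V_j^TA)\le v_j,\ j=1,\dots,s\}$ a polyhedron of matrices, and let $S_0^\infty=\{x\in S\mid A^tx\in S\ \text{for all } A\in U_0 \text{ and all integers } t\ge1\}$. Suppose that $S$ is compact and $S_0^\infty$ is full-dimensional. Then $U_0$ is bounded and every matrix in $U_0$ has spectral radius less than or equal to one.
   Context: Full-dimensional means having nonempty interior. The spectral radius of a square matrix is the maximum modulus of its eigenvalues. *)

(* Defs.v *)
From HB Require Import structures.
From mathcomp Require Import all_boot all_order all_algebra.
From mathcomp Require Import all_classical all_reals all_analysis.
From mathcomp Require Import complex.
Set Implicit Arguments. Unset Strict Implicit. Unset Printing Implicit Defensive.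
Import Order.TTheory GRing.Theory Num.Theory.
Import numFieldTopology.Exports numFieldNormedType.Exports.
Local Open Scope ring_scope.
Local Open Scope classical_set_scope.

Definition polyhedron (R : realType) (n : nat) (S : set 'cV[R]_n) : Prop :=
  exists (m : nat) (C : 'M[R]_(m, n)) (d : 'cV[R]_m),
    S = [set x | forall i : 'I_m, (C *m x) i ord0 <= d i ord0].

Definition Upoly (R : realType) (n s : nat) (V : 'I_s -> 'M[R]_n) (v : 'I_s -> R)
  : set 'M[R]_n :=
  [set A | forall j : 'I_s, \tr ((V j)^T *m A) <= v j].

Definition Sinf (R : realType) (n : nat) (S : set 'cV[R]_n) (U : set 'M[R]_n)
  : set 'cV[R]_n :=
  [set x | S x /\ forall A, U A -> forall t : nat, (1 <= t)%N -> S (A ^+ t *m x)].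

Definition cmod (R : rcfType) (z : R[i]) : R :=
  Num.sqrt (complex.Re z ^+ 2 + complex.Im z ^+ 2).

(* Spectral radius: the maximum modulus of the (complex) eigenvalues of A.
   The set of eigenvalues is finite, so the supremum is a maximum
   (for n = 0 there are no eigenvalues). *)
Definition spectral_radius (R : realType) (n : nat) (A : 'M[R]_n) : R :=
  sup [set cmod z | z in [set z : R[i] |
         eigenvalue (map_mx (fun a : R => a%:C%C) A) z]].

(* Main.v *)
Require Import Defs.
From HB Require Import structures.
From mathcomp Require Import all_boot all_order all_algebra.
From mathcomp Require Import all_classical all_reals all_analysis.
From mathcomp Require Import complex.
From mathcomp Require Import ring lra.
Import Order.TTheory GRing.Theory Num.Theory.
Import numFieldTopology.Exports numFieldNormedType.Exports.
Local Open Scope ring_scope.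
Local Open Scope classical_set_scope.

Lemma entry_le_norm (R : realType) m n (M : 'M[R]_(m, n)) i j : `|M i j| <= `|M|.
Proof.
rewrite [leRHS]/Num.Def.normr /= mx_normrE; apply/bigmax_geP; right => /=.
by exists (i, j).
Qed.

Lemma norm_le_entries (R : realType) m n (M : 'M[R]_(m, n)) c :
  0 <= c -> (forall i j, `|M i j| <= c) -> `|M| <= c.
Proof.
move=> c0 H; rewrite [leLHS]/Num.Def.normr /= mx_normrE.
by apply: bigmax_le => // -[i j] _; exact: H.
Qed.

Lemma entries_bounded (R : realType) (n : nat) (S : set 'cV[R]_n)
    (U : set 'M[R]_n) :
  compact S -> interior (Sinf S U) !=set0 ->
  exists K : R, 0 < K /\ forall A, U A -> forall t, (1 <= t)%N ->
    forall i j, `|(A ^+ t) i j| <= K.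
Proof.
move=> cS [x0 hx0].
have [M [_ HM]] := compact_bounded cS.
set Mp := `|M| + 1.
have HS : forall x, S x -> `|x| <= Mp.
  apply: HM; rewrite /Mp; apply: (le_lt_trans (real_ler_norm _)) => //.
    exact: num_real.
  by rewrite ltrDl.
have Mp0 : 0 < Mp by rewrite /Mp ltr_pwDr.
have [e e0 he] := (nbhs_ballP _ _).1 hx0.
exists (2 * Mp / (e / 2)); split.
  by rewrite divr_gt0 // ?mulr_gt0 // divr_gt0.
move=> A UA t t1 i j.
set y := x0 + (e / 2) *: delta_mx j 0.
have e20 : 0 < e / 2 by rewrite divr_gt0.
have hy : Sinf S U y.
  apply: he; rewrite -ball_normE /ball_ /= /y opprD addrA subrr add0r normrN.
  apply: (le_lt_trans (y := e / 2)); last by lra.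
  apply: norm_le_entries; first exact: ltW.
  move=> a b; rewrite !mxE normrM gtr0_norm //.
  case: (_ && _) => /=; first by rewrite normr1 mulr1.
  by rewrite normr0 mulr0 ltW.
have hx : Sinf S U x0 by apply: he; exact: ballxx.
have Sy := hy.2 A UA t t1.
have Sx := hx.2 A UA t t1.
have E : A ^+ t *m y - A ^+ t *m x0 = (e / 2) *: col j (A ^+ t).
  by rewrite /y mulmxDr addrAC subrr add0r -scalemxAr colE.
have := @entry_le_norm _ _ _ (A ^+ t *m y - A ^+ t *m x0) i 0.
rewrite E !mxE normrM gtr0_norm // => h1.
rewrite ler_pdivlMr // mulrC.
apply: (le_trans h1).
rewrite -E; apply: (le_trans (ler_normB _ _)).
have := HS _ Sy; have := HS _ Sx; lra.
Qed.
Import Normc.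

Lemma cmod_normc (R : realType) (z : R[i]) : cmod z = normc z.
Proof. by case: z. Qed.

Lemma normc_ge0 (R : realType) (z : R[i]) : 0 <= normc z.
Proof. by case: z => a b; rewrite /normc sqrtr_ge0. Qed.

Lemma normc_real (R : realType) (r : R) : normc (r%:C)%C = `|r|.
Proof. by rewrite /normc /= expr0n /= addr0 sqrtr_sqr. Qed.

Lemma normcX (R : realType) (z : R[i]) t : normc (z ^+ t) = normc z ^+ t.
Proof.
elim: t => [|t IH]; first by rewrite !expr0 normc1.
by rewrite !exprS normcM IH.
Qed.

Lemma normc_sum (R : realType) (I : finType) (F : I -> R[i]) :
  normc (\sum_i F i) <= \sum_i normc (F i).
Proof.
apply: (big_ind2 (fun a b => normc a <= b)).
- by rewrite normc0.
- move=> a1 b1 a2 b2 h1 h2; apply: (le_trans (le_normcD _ _)); exact: lerD.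
- by [].
Qed.

Lemma eig_pow (R : realType) n (A : 'M[R]_n) (w : 'rV[R[i]]_n) z :
  w *m map_mx (fun a : R => (a%:C)%C) A = z *: w ->
  forall t, w *m map_mx (fun a : R => (a%:C)%C) (A ^+ t) = z ^+ t *: w.
Proof.
move=> h; elim=> [|t IH].
  rewrite !expr0 scale1r.
  have -> : map_mx (fun a : R => (a%:C)%C) (1 : 'M[R]_n) = 1%:M.
    by apply/matrixP => i j; rewrite !mxE; case: (i == j).
  by rewrite mulmx1.
rewrite exprSr -mulmxE.
have -> : map_mx (fun a : R => (a%:C)%C) (A ^+ t *m A) =
   map_mx (fun a : R => (a%:C)%C) (A ^+ t) *m map_mx (fun a : R => (a%:C)%C) A.
  exact: (map_mxM (real_complex R)).
by rewrite mulmxA IH -scalemxAl h scalerA exprSr.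
Qed.

Lemma pow_bounded_le1 (R : realType) (x C : R) : 0 <= x ->
  (forall t, (1 <= t)%N -> x ^+ t <= C) -> x <= 1.
Proof.
move=> x0 H; rewrite leNgt; apply/negP => x1.
have bern : forall t : nat, 1 + t%:R * (x - 1) <= x ^+ t.
  elim=> [|t IH]; first by rewrite mul0r addr0 expr0.
  rewrite exprS -natr1.
  have t0 : 0 <= t%:R :> R by [].
  have h1 : x * (1 + t%:R * (x - 1)) <= x * x ^+ t by rewrite ler_wpM2l.
  have h2 : 0 <= t%:R * ((x - 1) * (x - 1)) by rewrite mulr_ge0 // mulr_ge0 // subr_ge0 ltW.
  nra.
set t := (Num.trunc (C / (x - 1))).+1.
have := truncnS_gt (C / (x - 1)); rewrite -/t => Ht.
have xm : 0 < x - 1 by rewrite subr_gt0.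
have : C < t%:R * (x - 1) by rewrite -ltr_pdivrMr.
have := H t isT; have := bern t; lra.
Qed.

Lemma eig_le1 (R : realType) n (A : 'M[R]_n) (K : R) :
  (forall t, (1 <= t)%N -> forall i j, `|(A ^+ t) i j| <= K) ->
  forall z, eigenvalue (map_mx (fun a : R => (a%:C)%C) A) z -> normc z <= 1.
Proof.
move=> hK z /eigenvalueP [w hw w0].
set W := \sum_j normc (w ord0 j).
have [j wj] : exists j, w ord0 j != 0.
  case: (pselect (exists j, w ord0 j != 0)) => // nw.
  suff : w == 0 by rewrite (negbTE w0).
  apply/eqP/matrixP => i k.
  rewrite (ord1 i) mxE; have : w ord0 k != 0 -> False by move=> h; apply: nw; exists k.
  by move=> h; apply/eqP; apply/negPn/negP => /h.
have W0 : 0 < W.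
  apply: (@lt_le_trans _ _ (normc (w ord0 j))).
    rewrite lt0r normc_ge0 andbT; apply/negP => /eqP/eq0_normc/eqP.
    by rewrite (negbTE wj).
  rewrite /W (bigD1 j) //= lerDl; apply: sumr_ge0 => k _; exact: normc_ge0.
apply: (@pow_bounded_le1 _ _ (n%:R * K)); first exact: normc_ge0.
move=> t t1.
have hj : forall j, normc z ^+ t * normc (w ord0 j) <= W * K.
  move=> k.
  have := @eig_pow _ _ _ _ _ hw t => /matrixP /(_ ord0 k).
  rewrite mxE [in X in _ = X]mxE => e.
  rewrite -normcX -normcM -e.
  apply: le_trans; first exact: normc_sum.
  rewrite /W mulr_suml; apply: ler_sum => i _.
  rewrite mxE normcM normc_real ler_wpM2l //; first exact: normc_ge0.
  exact: hK.
have : normc z ^+ t * W <= n%:R * K * W.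
  rewrite /W mulr_sumr.
  apply: (le_trans (ler_sum _ (fun k _ => hj k))).
  rewrite sumr_const card_ord -mulr_natr mul1r -/W; lra.
by rewrite ler_pM2r.
Qed.

Theorem proposition15 (R : realType) (n s : nat) (S : set 'cV[R]_n)
    (V : 'I_s -> 'M[R]_n) (v : 'I_s -> R) :
  polyhedron S ->
  compact S ->
  interior (Sinf S (Upoly V v)) !=set0 ->
  bounded_set (Upoly V v) /\
  (forall A : 'M[R]_n, Upoly V v A -> spectral_radius A <= 1).
Proof.
move=> _ cS hint.
have [K [K0 hK]] := @entries_bounded _ _ _ _ cS hint.
split.
  exists K; split; first exact: num_real.
  move=> x Kx A UA.
  apply: norm_le_entries; first exact: (le_trans (ltW K0) (ltW Kx)).
  move=> i j; rewrite -[A]expr1.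
  exact: (le_trans (hK A UA 1%N isT i j) (ltW Kx)).
move=> A UA; rewrite /spectral_radius.
set E := [set cmod z | z in _].
case: (pselect (E !=set0)) => [ne|e0].
  apply: ge_sup ne _ => y [z hz <-]; rewrite cmod_normc.
  exact: (@eig_le1 _ _ A K (hK A UA) z hz).
have -> : E = set0.
  by apply/seteqP; split=> y // Ey; apply: e0; exists y.
by rewrite sup0 ler01.
Qed.
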